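(* Let $X$ be a topological space in which every open set is a union of countably many clopen sets. The following are equivalent: (1) $X$ is a $\overline{\mathrm{QN}}$ space; (2) $X$ is a QN space; (3) every sequence of Borel real-valued functions on $X$ converging pointwise to $0$ converges to $0$ quasi-normally; (4) every sequence of Borel real-valued functions on $X$ converging pointwise to a function $f$ converges quasi-normally to $f$.
   Context: Functions $f_n:X\to\mathbb{R}$ converge quasi-normally to $f$ if there are positive reals $\epsilon_n\to0$ such that for each $x\in X$, $|f_n(x)-f(x)|<\epsilon_n$ for all but finitely many $n$. $X$ is a QN space if every sequence of continuous real-valued functions on $X$ converging pointwise to $0$ converges to $0$ quasi-normally. $X$ is a $\overline{\mathrm{QN}}$ space if whenever a sequence of continuous real-valued functions on $X$ converges pointwise to a function $f:X\to\mathbb{R}$ (not assumed continuous), it converges to $f$ quasi-normally. *)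

(* Defs.v *)
From Stdlib Require Import Reals.
Open Scope R_scope.

Record topology (X : Type) := {
  is_open : (X -> Prop) -> Prop;
  open_full : is_open (fun _ => True);
  open_empty : is_open (fun _ => False);
  open_inter : forall U V, is_open U -> is_open V -> is_open (fun x => U x /\ V x);
  open_union : forall (I : Type) (F : I -> X -> Prop),
      (forall i, is_open (F i)) -> is_open (fun x => exists i, F i x)
}.
Arguments is_open {X} _ _.

Definition clopen {X : Type} (T : topology X) (U : X -> Prop) : Prop :=
  is_open T U /\ is_open T (fun x => ~ U x).

Definition open_countable_union_clopen {X : Type} (T : topology X) : Prop :=
  forall U, is_open T U ->
    exists C : nat -> X -> Prop,
      (forall n, clopen T (C n)) /\ (forall x, U x <-> exists n, C n x).

Definition continuous_fun {X : Type} (T : topology X) (f : X -> R) : Prop :=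
  forall V : R -> Prop, open_set V -> is_open T (fun x => V (f x)).

Definition borel_set {X : Type} (T : topology X) (A : X -> Prop) : Prop :=
  forall S : (X -> Prop) -> Prop,
    (forall U, is_open T U -> S U) ->
    (forall B, S B -> S (fun x => ~ B x)) ->
    (forall Bn : nat -> X -> Prop, (forall n, S (Bn n)) -> S (fun x => exists n, Bn n x)) ->
    S A.

Definition borel_fun {X : Type} (T : topology X) (f : X -> R) : Prop :=
  forall V : R -> Prop, open_set V -> borel_set T (fun x => V (f x)).

Definition pointwise_cv {X : Type} (fn : nat -> X -> R) (f : X -> R) : Prop :=
  forall x, Un_cv (fun n => fn n x) (f x).

Definition quasi_normal_cv {X : Type} (fn : nat -> X -> R) (f : X -> R) : Prop :=
  exists eps : nat -> R,
    (forall n, 0 < eps n) /\ Un_cv eps 0 /\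
    forall x, exists N : nat, forall n, (N <= n)%nat -> Rabs (fn n x - f x) < eps n.

Definition QN_space {X : Type} (T : topology X) : Prop :=
  forall fn : nat -> X -> R, (forall n, continuous_fun T (fn n)) ->
    pointwise_cv fn (fun _ => 0) -> quasi_normal_cv fn (fun _ => 0).

Definition QNbar_space {X : Type} (T : topology X) : Prop :=
  forall (fn : nat -> X -> R) (f : X -> R), (forall n, continuous_fun T (fn n)) ->
    pointwise_cv fn f -> quasi_normal_cv fn f.

Definition borel_QN {X : Type} (T : topology X) : Prop :=
  forall fn : nat -> X -> R, (forall n, borel_fun T (fn n)) ->
    pointwise_cv fn (fun _ => 0) -> quasi_normal_cv fn (fun _ => 0).

Definition borel_QNbar {X : Type} (T : topology X) : Prop :=
  forall (fn : nat -> X -> R) (f : X -> R), (forall n, borel_fun T (fn n)) ->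
    pointwise_cv fn f -> quasi_normal_cv fn f.

(* Main.v *)
Require Import Defs.
From Stdlib Require Import Reals Lra Lia.
From Stdlib Require Import Classical ClassicalEpsilon FunctionalExtensionality PropExtensionality.
From Stdlib Require Cantor.
From Stdlib Require Import ZArith.
Open Scope R_scope.

Section Gen.
Context {X : Type} (T : topology X).

Lemma open_ext U V : is_open T U -> (forall x, U x <-> V x) -> is_open T V.
Proof.
  intros H E. replace V with U; auto.
  extensionality x; apply propositional_extensionality; auto.
Qed.

Lemma open_or U V : is_open T U -> is_open T V -> is_open T (fun x => U x \/ V x).
Proof.
  intros HU HV.
  pose (F := fun b : bool => if b then U else V).
  assert (H := open_union X T bool F (fun b => match b with true => HU | false => HV end)).
  apply (open_ext _ _ H). intros x; split.
  - intros [[|] Hb]; simpl in Hb; auto.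
  - intros [Hx|Hx]; [exists true|exists false]; exact Hx.
Qed.

Lemma clopen_ext U V : clopen T U -> (forall x, U x <-> V x) -> clopen T V.
Proof.
  intros [H1 H2] E; split.
  - exact (open_ext _ _ H1 E).
  - apply (open_ext _ _ H2). intro x; rewrite (E x); tauto.
Qed.

Lemma clopen_compl C : clopen T C -> clopen T (fun x => ~ C x).
Proof.
  intros [H1 H2]; split; auto.
  apply (open_ext _ _ H1). intro x; split; intro H; [intro; contradiction | apply NNPP; exact H].
Qed.

Lemma clopen_or U V : clopen T U -> clopen T V -> clopen T (fun x => U x \/ V x).
Proof.
  intros [H1 H2] [H3 H4]; split.
  - apply open_or; auto.
  - apply (open_ext _ _ (open_inter X T _ _ H2 H4)). intro x; tauto.
Qed.

Lemma clopen_and U V : clopen T U -> clopen T V -> clopen T (fun x => U x /\ V x).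
Proof.
  intros HU HV.
  assert (H := clopen_compl _ (clopen_or _ _ (clopen_compl _ HU) (clopen_compl _ HV))).
  apply (clopen_ext _ _ H). intro x. split.
  - intro H0. split; apply NNPP; intro; apply H0; auto.
  - intros [A B] [C|C]; auto.
Qed.

Lemma clopen_xor U V : clopen T U -> clopen T V -> clopen T (fun x => ~ (U x <-> V x)).
Proof.
  intros HU HV.
  assert (H := clopen_or _ _ (clopen_and _ _ HU (clopen_compl _ HV)) (clopen_and _ _ (clopen_compl _ HU) HV)).
  apply (clopen_ext _ _ H). intro x. destruct (classic (U x)); destruct (classic (V x)); tauto.
Qed.

Lemma clopen_finite_union (P : nat -> X -> Prop) : (forall k, clopen T (P k)) ->
  forall j, clopen T (fun x => exists k, (k <= j)%nat /\ P k x).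
Proof.
  intros HP j; induction j.
  - apply (clopen_ext _ _ (HP 0%nat)). intro x; split.
    + intro; exists 0%nat; split; auto.
    + intros [k [Hk H]]. replace k with 0%nat in H by lia. exact H.
  - apply (clopen_ext _ _ (clopen_or _ _ IHj (HP (S j)))). intro x; split.
    + intros [[k [Hk H]]|H]; [exists k; split; [lia|auto] | exists (S j); split; auto].
    + intros [k [Hk H]]. destruct (Nat.eq_dec k (S j)) as [->|Hne]; [right; auto | left; exists k; split; [lia|auto]].
Qed.

Definition loc_const (f : X -> R) := forall x, exists U, is_open T U /\ U x /\ forall z, U z -> f z = f x.

Lemma loc_const_cont f : loc_const f -> continuous_fun T f.
Proof.
  intros H V HVo.
  assert (Us : forall y, {U | is_open T U /\ U y /\ forall z, U z -> f z = f y}).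
  { intro y. apply constructive_indefinite_description. apply H. }
  pose (F := fun p : {y : X | V (f y)} => proj1_sig (Us (proj1_sig p))).
  assert (HF : forall p, is_open T (F p)).
  { intro p. unfold F. exact (proj1 (proj2_sig (Us (proj1_sig p)))). }
  apply (open_ext _ _ (open_union X T _ F HF)). intro x; split.
  - intros [[y Hy] Hx]. unfold F in Hx; simpl in Hx.
    rewrite (proj2 (proj2 (proj2_sig (Us y))) x Hx); auto.
  - intro Hx. exists (exist _ x Hx). unfold F; simpl. exact (proj1 (proj2 (proj2_sig (Us x)))).
Qed.

Lemma loc_const_comb f g (h : R -> R -> R) : loc_const f -> loc_const g -> loc_const (fun x => h (f x) (g x)).
Proof.
  intros Hf Hg x. destruct (Hf x) as [U [HU [HUx HUe]]]. destruct (Hg x) as [V [HV [HVx HVe]]].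
  exists (fun z => U z /\ V z). split; [apply open_inter; auto|]. split; [auto|].
  intros z [Hz1 Hz2]. rewrite (HUe z Hz1), (HVe z Hz2); auto.
Qed.

Lemma loc_const_ind C a b : clopen T C ->
  loc_const (fun x => if excluded_middle_informative (C x) then a else b).
Proof.
  intros [H1 H2] x. destruct (excluded_middle_informative (C x)) as [Hc|Hc].
  - exists C; split; auto; split; auto. intros z Hz. destruct (excluded_middle_informative (C z)); tauto.
  - exists (fun z => ~ C z); split; auto; split; auto. intros z Hz. destruct (excluded_middle_informative (C z)); tauto.
Qed.

End Gen.

Fixpoint Mx (a : nat -> R) (k : nat) : R :=
  match k with O => a O | S k' => Rmax (Mx a k') (a (S k')) end.

Lemma Mx_ge a n k : (k <= n)%nat -> a k <= Mx a n.
Proof.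
  induction n; intro H; simpl.
  - replace k with 0%nat by lia; lra.
  - destruct (Nat.eq_dec k (S n)) as [->|Hne].
    + apply Rmax_r.
    + eapply Rle_trans; [apply IHn; lia | apply Rmax_l].
Qed.

Lemma Mx_le a n b : (forall k, (k <= n)%nat -> a k <= b) -> Mx a n <= b.
Proof.
  induction n; intro H; simpl.
  - apply H; lia.
  - apply Rmax_lub; [apply IHn; intros; apply H; lia | apply H; lia].
Qed.

Lemma finite_bound (P : nat -> nat -> Prop) :
  (forall k, exists M, forall i, (M <= i)%nat -> P k i) ->
  forall K, exists I, forall k, (k <= K)%nat -> forall i, (I <= i)%nat -> P k i.
Proof.
  intros H K; induction K.
  - destruct (H 0%nat) as [M HM]. exists M. intros k Hk i Hi. replace k with 0%nat by lia; auto.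
  - destruct IHK as [I HI]. destruct (H (S K)) as [M HM]. exists (Nat.max I M).
    intros k Hk i Hi. destruct (Nat.eq_dec k (S K)) as [->|Hne].
    + apply HM; lia.
    + apply HI; lia.
Qed.

Section Ev.
Context {X : Type} (T : topology X) (hQN : QN_space T).

Lemma event_lemma (W : nat -> nat -> X -> Prop) :
  (forall k i, clopen T (W k i)) ->
  (forall x k, exists M, forall i, (M <= i)%nat -> ~ W k i x) ->
  exists t : nat -> nat, forall x, exists K, forall k, (K <= k)%nat ->
    forall i, (t k <= i)%nat -> ~ W k i x.
Proof.
  intros HW Hev.
  pose (tm := fun i k x => if excluded_middle_informative (W k i x) then / INR (S k) else 0).
  pose (f := fun i x => Mx (fun k => tm i k x) i).
  assert (Htm_nn : forall i k x, 0 <= tm i k x).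
  { intros i k x; unfold tm; destruct (excluded_middle_informative _); [|lra].
    left; apply Rinv_0_lt_compat, lt_0_INR; lia. }
  assert (Hcont : forall i, continuous_fun T (f i)).
  { intro i. apply loc_const_cont. unfold f. generalize i at 2. intro n. induction n; simpl.
    - apply loc_const_ind; auto.
    - apply (loc_const_comb T _ _ Rmax IHn). apply loc_const_ind; auto. }
  assert (Hpw : pointwise_cv f (fun _ => 0)).
  { intros x eps Heps. destruct (archimed_cor1 eps Heps) as [N [HN HN0]].
    destruct (finite_bound (fun k i => ~ W k i x) (fun k => Hev x k) N) as [I HI].
    exists I. intros i Hi. unfold Rdist.
    assert (Hb : f i x <= / INR (S N)).
    { apply Mx_le. intros k Hk. unfold tm. destruct (excluded_middle_informative (W k i x)) as [Hw|Hw].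
      - destruct (Compare_dec.le_lt_dec k N) as [Hkn|Hkn].
        + exfalso; apply (HI k Hkn i); auto; lia.
        + apply Rinv_le_contravar; [apply lt_0_INR; lia| apply le_INR; lia].
      - left; apply Rinv_0_lt_compat, lt_0_INR; lia. }
    assert (Hnn : 0 <= f i x) by (eapply Rle_trans; [apply (Htm_nn i 0%nat x)| apply (Mx_ge (fun k => tm i k x) i 0%nat); lia]).
    assert (/ INR (S N) <= / INR N) by (apply Rinv_le_contravar; [apply lt_0_INR; lia| apply le_INR; lia]).
    rewrite Rminus_0_r, Rabs_right by lra. lra. }
  destruct (hQN f Hcont Hpw) as [eps [Hpos [Hcv Hx]]].
  assert (Ht0 : forall k, exists I, forall i, (I <= i)%nat -> eps i < / INR (S k)).
  { intro k. destruct (Hcv (/ INR (S k))) as [I HI].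
    { apply Rinv_0_lt_compat, lt_0_INR; lia. }
    exists I. intros i Hi. specialize (HI i Hi). unfold Rdist in HI.
    rewrite Rminus_0_r in HI. apply Rabs_def2 in HI. lra. }
  pose (t0 := fun k => proj1_sig (constructive_indefinite_description _ (Ht0 k))).
  exists (fun k => Nat.max k (t0 k)).
  intros x. destruct (Hx x) as [N HN]. exists N. intros k Hk i Hi Hw.
  assert (H1 := HN i ltac:(lia)). rewrite Rminus_0_r in H1. apply Rabs_def2 in H1.
  assert (H2 : eps i < / INR (S k)).
  { apply (proj2_sig (constructive_indefinite_description _ (Ht0 k))). unfold t0 in Hi. lia. }
  assert (H3 : tm i k x <= f i x) by (apply (Mx_ge (fun k => tm i k x)); lia).
  unfold tm in H3. destruct (excluded_middle_informative (W k i x)); [|contradiction]. lra.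
Qed.

Lemma stabilize (C : nat -> nat -> X -> Prop) (A : nat -> X -> Prop) :
  (forall k j, clopen T (C k j)) ->
  (forall x k, exists J, forall j, (J <= j)%nat -> (C k j x <-> A k x)) ->
  exists t : nat -> nat, forall x, exists K, forall k, (K <= k)%nat ->
    forall j, (t k <= j)%nat -> (C k j x <-> A k x).
Proof.
  intros HC HA.
  destruct (event_lemma (fun k i x => ~ (C k i x <-> C k (S i) x))) as [t Ht].
  - intros k i. apply clopen_xor; auto.
  - intros x k. destruct (HA x k) as [J HJ]. exists J. intros i Hi Hn. apply Hn.
    rewrite (HJ i Hi), (HJ (S i) ltac:(lia)). tauto.
  - exists t. intros x. destruct (Ht x) as [K HK]. exists K. intros k Hk j Hj.
    assert (Hst : forall d, C k (t k + d)%nat x <-> C k (t k) x).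
    { induction d.
      - rewrite Nat.add_0_r; tauto.
      - assert (Hn := HK k Hk (t k + d)%nat ltac:(lia)).
        apply NNPP in Hn. replace (t k + S d)%nat with (S (t k + d)) by lia. rewrite <- Hn. exact IHd. }
    destruct (HA x k) as [J HJ].
    replace j with (t k + (j - t k))%nat by lia. rewrite Hst.
    rewrite <- (HJ (t k + (J + j))%nat ltac:(lia)). rewrite Hst. tauto.
Qed.

End Ev.

Section L.
Context {X : Type} (T : topology X).

Definition Lset (A : X -> Prop) := exists C : nat -> X -> Prop,
  (forall j, clopen T (C j)) /\ forall x, exists J, forall j, (J <= j)%nat -> (C j x <-> A x).

Lemma L_ext A B : Lset A -> (forall x, A x <-> B x) -> Lset B.
Proof.
  intros [C [HC HA]] E. exists C; split; auto. intro x. destruct (HA x) as [J HJ].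
  exists J. intros j Hj. rewrite <- E; auto.
Qed.

Lemma L_open (hX : open_countable_union_clopen T) U : is_open T U -> Lset U.
Proof.
  intro HU. destruct (hX U HU) as [C [HC HUC]].
  exists (fun j x => exists k, (k <= j)%nat /\ C k x). split.
  - intro j. apply clopen_finite_union; auto.
  - intro x. destruct (classic (U x)) as [Hx|Hx].
    + destruct (proj1 (HUC x) Hx) as [n Hn]. exists n. intros j Hj. split; auto.
      intros _. exists n; split; auto.
    + exists 0%nat. intros j _. split; [|tauto]. intros [k [_ Hk]]. apply HUC. exists k; auto.
Qed.

Lemma L_compl A : Lset A -> Lset (fun x => ~ A x).
Proof.
  intros [C [HC HA]]. exists (fun j x => ~ C j x). split.
  - intro j; apply clopen_compl; auto.
  - intro x. destruct (HA x) as [J HJ]. exists J. intros j Hj. rewrite (HJ j Hj). tauto.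
Qed.

Lemma L_union (hQN : QN_space T) (A : nat -> X -> Prop) :
  (forall k, Lset (A k)) -> Lset (fun x => exists k, A k x).
Proof.
  intro HA.
  pose (F := fun k => proj1_sig (constructive_indefinite_description _ (HA k))).
  assert (HF : forall k, (forall j, clopen T (F k j)) /\
     forall x, exists J, forall j, (J <= j)%nat -> (F k j x <-> A k x)).
  { intro k. exact (proj2_sig (constructive_indefinite_description _ (HA k))). }
  destruct (stabilize T hQN F A (fun k => proj1 (HF k)) (fun x k => proj2 (HF k) x)) as [t Ht].
  exists (fun j x => exists k, (k <= j)%nat /\ F k (Nat.max j (t k)) x). split.
  - intro j. apply (clopen_finite_union T (fun k => F k (Nat.max j (t k)))). intro k; apply HF.
  - intro x. destruct (classic (exists k, A k x)) as [[k0 Hk0]|Hn].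
    + destruct (proj2 (HF k0) x) as [J HJ]. exists (Nat.max k0 J). intros j Hj. split.
      * intros _. exists k0; auto.
      * intros _. exists k0. split; [lia|]. apply HJ; [lia|auto].
    + destruct (Ht x) as [K HK].
      destruct (finite_bound (fun k j => F k j x <-> A k x) (fun k => proj2 (HF k) x) K) as [I HI].
      exists I. intros j Hj. split; [|tauto]. intros [k [Hk Hf]]. exists k.
      destruct (Compare_dec.le_lt_dec k K) as [Hkk|Hkk].
      * apply (HI k Hkk (Nat.max j (t k))); [lia|auto].
      * apply (HK k ltac:(lia) (Nat.max j (t k))); [lia|auto].
Qed.

Lemma L_borel (hX : open_countable_union_clopen T) (hQN : QN_space T) A : borel_set T A -> Lset A.
Proof.
  intro H. apply H.
  - apply L_open; auto.
  - apply L_compl.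
  - apply L_union; auto.
Qed.

Lemma L_or (hQN : QN_space T) A B : Lset A -> Lset B -> Lset (fun x => A x \/ B x).
Proof.
  intros HA HB. apply (L_ext (fun x => exists k : nat, (match k with O => A | _ => B end) x)).
  - apply L_union; auto. intros [|k]; auto.
  - intro x; split.
    + intros [[|k] H]; auto.
    + intros [H|H]; [exists 0%nat| exists 1%nat]; auto.
Qed.

Lemma L_and (hQN : QN_space T) A B : Lset A -> Lset B -> Lset (fun x => A x /\ B x).
Proof.
  intros HA HB. apply (L_ext (fun x => ~ (~ A x \/ ~ B x))).
  - apply L_compl, L_or; auto; apply L_compl; auto.
  - intro x; split.
    + intro H; split; apply NNPP; intro; apply H; auto.
    + intros [a b] [c|c]; auto.
Qed.

Lemma L_seq (hQN : QN_space T) (A : nat -> X -> Prop) : (forall j, Lset (A j)) ->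
  exists D : nat -> X -> Prop, (forall j, clopen T (D j)) /\
    forall x, exists J, forall j, (J <= j)%nat -> (D j x <-> A j x).
Proof.
  intro HA.
  pose (F := fun k => proj1_sig (constructive_indefinite_description _ (HA k))).
  assert (HF : forall k, (forall j, clopen T (F k j)) /\
     forall x, exists J, forall j, (J <= j)%nat -> (F k j x <-> A k x)).
  { intro k. exact (proj2_sig (constructive_indefinite_description _ (HA k))). }
  destruct (stabilize T hQN F A (fun k => proj1 (HF k)) (fun x k => proj2 (HF k) x)) as [t Ht].
  exists (fun j => F j (t j)). split.
  - intro j; apply HF.
  - intro x. destruct (Ht x) as [K HK]. exists K. intros j Hj. apply HK; auto.
Qed.

Lemma event_L (hQN : QN_space T) (V : nat -> nat -> X -> Prop) :
  (forall k i, Lset (V k i)) ->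
  (forall x k, exists M, forall i, (M <= i)%nat -> ~ V k i x) ->
  exists t : nat -> nat, forall x, exists K, forall k, (K <= k)%nat ->
    forall i, (t k <= i)%nat -> ~ V k i x.
Proof.
  intros HV Hev.
  destruct (L_seq hQN (fun j => V (fst (Cantor.of_nat j)) (snd (Cantor.of_nat j)))) as [D [HD HDx]].
  { intro j; apply HV. }
  assert (Hpair : forall x, exists J, forall k i, (J <= k \/ J <= i)%nat ->
     (D (Cantor.to_nat (k, i)) x <-> V k i x)).
  { intro x. destruct (HDx x) as [J HJ]. exists J. intros k i Hki.
    assert (Hle := Cantor.to_nat_non_decreasing k i).
    rewrite (HJ (Cantor.to_nat (k, i)) ltac:(lia)). rewrite Cantor.cancel_of_to. simpl. tauto. }
  destruct (event_lemma T hQN (fun k i => D (Cantor.to_nat (k, i)))) as [t Ht].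
  - intros k i; apply HD.
  - intros x k. destruct (Hpair x) as [J HJ]. destruct (Hev x k) as [M HM].
    exists (Nat.max J M). intros i Hi. rewrite HJ by lia. apply HM; lia.
  - exists t. intro x. destruct (Ht x) as [K HK]. destruct (Hpair x) as [J HJ].
    exists (Nat.max K J). intros k Hk i Hi. rewrite <- HJ by lia. apply HK; lia.
Qed.

End L.

Fixpoint sT (t : nat -> nat) (k : nat) : nat :=
  match k with O => t O | S k' => (sT t k' + t (S k') + 1)%nat end.

Lemma sT_ge t k : (t k <= sT t k)%nat.
Proof. destruct k; simpl; lia. Qed.

Lemma sT_mono t a b : (a <= b)%nat -> (sT t a <= sT t b)%nat.
Proof. induction 1; simpl; lia. Qed.

Fixpoint kap (t : nat -> nat) (i : nat) : nat :=
  match i with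
  | O => O
  | S i' => if Nat.leb (sT t (S (kap t i'))) (S i') then S (kap t i') else kap t i'
  end.

Lemma kap_inv t i : (kap t i = O \/ (sT t (kap t i) <= i)%nat) /\ (i < sT t (S (kap t i)))%nat.
Proof.
  induction i.
  - simpl. split; auto. lia.
  - destruct IHi as [H1 H2].
    change (kap t (S i)) with (if Nat.leb (sT t (S (kap t i))) (S i) then S (kap t i) else kap t i).
    destruct (Nat.leb (sT t (S (kap t i))) (S i)) eqn:E.
    + apply Nat.leb_le in E. split; [right; auto|].
      change (sT t (S (S (kap t i)))) with (sT t (S (kap t i)) + t (S (S (kap t i))) + 1)%nat. lia.
    + apply Nat.leb_gt in E. split; [destruct H1; [left|right]; lia| lia].
Qed.

Lemma kap_big t K i : (sT t K <= i)%nat -> (K <= kap t i)%nat.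
Proof.
  intro H. destruct (kap_inv t i) as [_ H2].
  destruct (Compare_dec.le_lt_dec K (kap t i)) as [|Hl]; auto.
  assert (sT t (S (kap t i)) <= sT t K)%nat by (apply sT_mono; lia). lia.
Qed.

Lemma fin_eps {X : Type} (g : nat -> X -> R) (t : nat -> nat) :
  (forall x, exists K, forall k, (K <= k)%nat -> forall i, (t k <= i)%nat -> Rabs (g i x) < / INR (S k)) ->
  exists eps : nat -> R, (forall n, 0 < eps n) /\ Un_cv eps 0 /\
    forall x, exists N, forall n, (N <= n)%nat -> Rabs (g n x) < eps n.
Proof.
  intro H. exists (fun i => / INR (S (Nat.pred (kap t i)))). split; [|split].
  - intro n. apply Rinv_0_lt_compat, lt_0_INR; lia.
  - intros e He. destruct (archimed_cor1 e He) as [N [HN HN0]].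
    exists (sT t (S N)). intros i Hi. unfold Rdist. rewrite Rminus_0_r.
    assert (Hk := kap_big t (S N) i Hi).
    assert (0 < / INR (S (Nat.pred (kap t i)))) by (apply Rinv_0_lt_compat, lt_0_INR; lia).
    rewrite Rabs_right by lra.
    assert (/ INR (S (Nat.pred (kap t i))) <= / INR N) by (apply Rinv_le_contravar; [apply lt_0_INR; lia| apply le_INR; lia]).
    lra.
  - intro x. destruct (H x) as [K HK]. exists (sT t (S K)). intros i Hi.
    assert (Hk := kap_big t (S K) i Hi).
    destruct (kap_inv t i) as [[H0|H1] _]; [lia|].
    apply HK; [lia|].
    assert (Hs := sT_ge t (Nat.pred (kap t i))).
    assert (sT t (Nat.pred (kap t i)) <= sT t (kap t i))%nat by (apply sT_mono; lia). lia.
Qed.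

Lemma floor_ex y c : 0 < c -> exists z : Z, IZR z * c <= y < IZR z * c + c.
Proof.
  intro Hc. destruct (archimed (y / c)) as [H1 H2].
  exists (up (y / c) - 1)%Z. rewrite minus_IZR.
  set (r := y / c) in *. set (u := IZR (up r)) in *.
  assert (Hy : y = r * c) by (unfold r; field; lra).
  split; nra.
Qed.

Lemma IZR_nat_diff (z : Z) : IZR z = INR (Z.to_nat z) - INR (Z.to_nat (- z)).
Proof.
  destruct z; simpl.
  - lra.
  - rewrite INR_IZR_INZ, positive_nat_Z. simpl. lra.
  - rewrite INR_IZR_INZ, positive_nat_Z. simpl. rewrite <- Pos2Z.opp_pos, opp_IZR. lra.
Qed.

Lemma ball_open z r : open_set (fun y => Rabs (y - z) < r).
Proof.
  intros y Hy. unfold neighbourhood, included, disc.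
  assert (Hd : 0 < r - Rabs (y - z)) by lra.
  exists (mkposreal _ Hd). simpl. intros w Hw.
  assert (Htr := Rabs_triang (w - y) (y - z)).
  replace (w - y + (y - z)) with (w - z) in Htr by ring. lra.
Qed.

Lemma QN_borelQNbar (X : Type) (T : topology X) (hX : open_countable_union_clopen T)
  (hQN : QN_space T) : borel_QNbar T.
Proof.
  intros fn f Hb Hcv.
  pose (c := fun k => / INR (S k) / 5).
  assert (Hc : forall k, 0 < c k).
  { intro k; unfold c. apply Rmult_lt_0_compat; [apply Rinv_0_lt_compat, lt_0_INR; lia| lra]. }
  assert (Hc5 : forall k, 5 * c k = / INR (S k)).
  { intro k; unfold c. field. apply not_0_INR; lia. }
  pose (Q := fun k i j x => exists n m : nat,
      Rabs (fn i x - (INR n - INR m) * c k) < 2 * c k /\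
      Rabs (fn j x - (INR n - INR m) * c k) < 2 * c k).
  assert (HLball : forall i z r, Lset T (fun x => Rabs (fn i x - z) < r)).
  { intros i z r. apply L_borel; auto. apply (Hb i (fun y => Rabs (y - z) < r)), ball_open. }
  assert (HLQ : forall k i j, Lset T (Q k i j)).
  { intros k i j. unfold Q. apply L_union; auto. intro n. apply L_union; auto. intro m.
    apply L_and; auto. }
  pose (V := fun k i x => exists j, ~ Q k i (i + j)%nat x).
  destruct (event_L T hQN V) as [t Ht].
  - intros k i. unfold V. apply L_union; auto. intro j. apply L_compl; auto.
  - intros x k. destruct (Hcv x (c k / 2)) as [M HM]; [specialize (Hc k); lra|].
    exists M. intros i Hi [j Hj]. apply Hj.
    destruct (floor_ex (fn i x) (c k) (Hc k)) as [z Hz].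
    exists (Z.to_nat z), (Z.to_nat (- z)). rewrite <- IZR_nat_diff.
    assert (H1 := HM i ltac:(lia)). assert (H2 := HM (i + j)%nat ltac:(lia)).
    unfold Rdist in H1, H2. apply Rabs_def2 in H1. apply Rabs_def2 in H2.
    specialize (Hc k).
    split; apply Rabs_def1; lra.
  - destruct (fin_eps (fun i x => fn i x - f x) t) as [eps [Hpos [Hcv0 Hx]]].
    + intro x. destruct (Ht x) as [K HK]. exists K. intros k Hk i Hi.
      assert (Hnv := HK k Hk i Hi).
      assert (HQ : forall j, Q k i (i + j)%nat x).
      { intro j. apply NNPP. intro Hn. apply Hnv. exists j. auto. }
      destruct (Hcv x (c k)) as [M HM]; [apply Hc|].
      destruct (HQ M) as [n [m [A B]]].
      assert (H3 := HM (i + M)%nat ltac:(lia)). unfold Rdist in H3.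
      apply Rabs_def2 in A. apply Rabs_def2 in B. apply Rabs_def2 in H3.
      rewrite <- Hc5. specialize (Hc k). apply Rabs_def1; lra.
    + exists eps. split; [auto|split; auto].
Qed.

Theorem mainTheorem11 (X : Type) (T : topology X)
  (hX : open_countable_union_clopen T) :
  (QNbar_space T <-> QN_space T) /\
  (QN_space T <-> borel_QN T) /\
  (borel_QN T <-> borel_QNbar T).
Proof.
  assert (Hcb : forall f, continuous_fun T f -> borel_fun T f).
  { intros f Hf V HV S H1 H2 H3. apply H1. apply Hf; auto. }
  assert (A1 : borel_QNbar T -> borel_QN T) by (intros H fn Hb Hcv; apply H; auto).
  assert (A2 : borel_QN T -> QN_space T) by (intros H fn Hc Hcv; apply H; auto).
  assert (A3 : borel_QNbar T -> QNbar_space T) by (intros H fn f Hc Hcv; apply H; auto).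
  assert (A4 : QNbar_space T -> QN_space T) by (intros H fn Hc Hcv; apply H; auto).
  assert (A5 := QN_borelQNbar X T hX).
  tauto.
Qed.
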